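(* Let $M=(M_{ij})$ be a reduced $n\times n$ matrix of integers with $M_{ij}>0$ for all $i,j$. If there exist $i\neq j$ with $M_{ii}=1$ and $M_{jj}=1$, then $\mathrm{Cat}(M)=\emptyset$.
   Context: For an $n\times n$ matrix $M=(m_{ij})$ with entries in the natural numbers, $\mathrm{Cat}(M)$ denotes the collection of categories $A$ with exactly $n$ distinct objects $x_1,\dots,x_n$ such that $|A(x_i,x_j)|=m_{ij}$ for all $i,j$, where $A(x_i,x_j)$ is the set of morphisms from $x_i$ to $x_j$. A matrix $M$ is called non-reduced if there exist $i\neq j$ such that $M_{ki}=M_{kj}$ and $M_{ik}=M_{jk}$ for all $k$ (row $i$ equals row $j$ and column $i$ equals column $j$); it is called reduced otherwise. *)

(* Defs.v *)
From mathcomp Require Import all_boot all_algebra.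

Set Implicit Arguments.
Unset Strict Implicit.
Unset Printing Implicit Defensive.

(* A (small) category whose objects are x_0,...,x_(n-1) (indexed by 'I_n,
   hence pairwise distinct) and whose hom-sets are finite.
   Composition is written in diagrammatic order: comp f g = g o f. *)
Record fincat (n : nat) := FinCat {
  hom : 'I_n -> 'I_n -> finType;
  idm : forall i, hom i i;
  comp : forall i j k, hom i j -> hom j k -> hom i k;
  comp_idl : forall i j (f : hom i j), comp (idm i) f = f;
  comp_idr : forall i j (f : hom i j), comp f (idm j) = f;
  comp_assoc : forall i j k l (f : hom i j) (g : hom j k) (h : hom k l),
      comp (comp f g) h = comp f (comp g h)
}.

Definition inCat (n : nat) (M : 'M[nat]_n) (A : fincat n) : Prop :=
  forall i j : 'I_n, #|hom A i j| = M i j.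

Definition non_reduced (n : nat) (M : 'M[nat]_n) : Prop :=
  exists i j : 'I_n, i != j /\
    (forall k, M k i = M k j) /\ (forall k, M i k = M j k).

Definition reduced (n : nat) (M : 'M[nat]_n) : Prop := ~ non_reduced M.

(* Main.v *)
Require Import Defs.
From mathcomp Require Import all_boot all_algebra.

Lemma card1_eq (T : finType) (x y : T) : #|T| = 1 -> x = y.
Proof.
move=> h; have /fintype_le1P H : #|T| <= 1 by rewrite h.
by rewrite (H x y).
Qed.

Theorem mainTheorem8 (n : nat) (M : 'M[nat]_n) :
  reduced M ->
  (forall i j : 'I_n, 0 < M i j) ->
  (exists i j : 'I_n, i != j /\ M i i = 1 /\ M j j = 1) ->
  forall A : fincat n, ~ inCat M A.
Proof.
move=> red pos [i [j [nij [Mii Mjj]]]] A inA.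
apply: red; exists i, j; split => //.
have : 0 < #|Defs.hom A i j| by rewrite inA pos.
case/card_gt0P => f _.
have : 0 < #|Defs.hom A j i| by rewrite inA pos.
case/card_gt0P => g _.
have fg : Defs.comp f g = Defs.idm A i by apply: card1_eq; rewrite inA.
have gf : Defs.comp g f = Defs.idm A j by apply: card1_eq; rewrite inA.
split => k.
- rewrite -!inA.
  apply: (@bij_eq_card _ _ (fun h : Defs.hom A k i => Defs.comp h f)).
  exists (fun h : Defs.hom A k j => Defs.comp h g) => h /=.
    by rewrite Defs.comp_assoc fg Defs.comp_idr.
  by rewrite Defs.comp_assoc gf Defs.comp_idr.
- rewrite -!inA.
  apply: (@bij_eq_card _ _ (fun h : Defs.hom A i k => Defs.comp g h)).
  exists (fun h : Defs.hom A j k => Defs.comp f h) => h /=.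
    by rewrite -Defs.comp_assoc fg Defs.comp_idl.
  by rewrite -Defs.comp_assoc gf Defs.comp_idl.
Qed.
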